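(* Let $w_1,w_2$ be real numbers with $0\le w_1<w_2$, $\mathbf{w}=[w_1,w_2]^\top$, and define on $\mathbb{R}^2$ the ROWL penalty $\Omega_{\mathbf{w}}(\mathbf{x})=\mathbf{w}^\top|\mathbf{x}|_{\downarrow}$ and its envelope $\widetilde\Omega_{\mathbf{w}}=(\Omega_{\mathbf{w}}+\tfrac12\|\cdot\|^2)^{**}-\tfrac12\|\cdot\|^2$. For every $\delta>0$, the operator $R_\delta:=\mathrm{s\text{-}Prox}_{\widetilde\Omega_{\mathbf{w}}/(\delta+1)}:\mathbb{R}^2\to\mathbb{R}^2$ is the gradient of a (Fréchet) differentiable convex function, and this gradient is $(1+1/\delta)$-Lipschitz continuous.
   Context: $\|\cdot\|$ is the Euclidean norm on $\mathbb{R}^2$. For $\mathbf{x}\in\mathbb{R}^2$, $|\mathbf{x}|$ is the componentwise absolute value and $|\mathbf{x}|_{\downarrow}$ is $|\mathbf{x}|$ sorted in nonincreasing order. $g^{**}$ denotes the Fenchel biconjugate, where $g^*(u)=\sup_x(\langle x,u\rangle-g(x))$. For a function $g$ such that $\operatorname{argmin}_{\mathbf{y}}\big(g(\mathbf{y})+\frac12\|\mathbf{x}-\mathbf{y}\|^2\big)$ is a singleton for every $\mathbf{x}$, $\mathrm{s\text{-}Prox}_g(\mathbf{x})$ denotes that unique minimizer. *)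

(* Defs.v *)
From HB Require Import structures.
From mathcomp Require Import all_boot all_order all_algebra.
From mathcomp Require Import all_classical all_reals all_analysis.
Set Implicit Arguments. Unset Strict Implicit. Unset Printing Implicit Defensive.
Import Order.TTheory GRing.Theory Num.Theory.
Import numFieldNormedType.Exports.
Local Open Scope classical_set_scope.
Local Open Scope ring_scope.

Section Defs.
Variable R : realType.
Implicit Types x y u : R * R.

Definition inner2 x y : R := x.1 * y.1 + x.2 * y.2.
Definition sqnorm2 x : R := inner2 x x.
Definition enorm2 x : R := Num.sqrt (sqnorm2 x).

Definition absdown x : R * R :=
  (Num.max `|x.1| `|x.2|, Num.min `|x.1| `|x.2|).

Definition rowl (w1 w2 : R) x : R := inner2 (w1, w2) (absdown x).

Definition fconj (g : R * R -> \bar R) (u : R * R) : \bar R :=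
  ereal_sup (range (fun x => ((inner2 x u)%:E - g x)%E)).
Definition fbiconj (g : R * R -> \bar R) : R * R -> \bar R := fconj (fconj g).

Definition rowl_env (w1 w2 : R) x : \bar R :=
  (fbiconj (fun y => (rowl w1 w2 y + sqnorm2 y / 2)%:E) x - (sqnorm2 x / 2)%:E)%E.

Definition prox_obj (g : R * R -> \bar R) x y : \bar R :=
  (g y + (sqnorm2 (x - y) / 2)%:E)%E.
Definition is_sprox (g : R * R -> \bar R) x y : Prop :=
  (forall z, (prox_obj g x y <= prox_obj g x z)%E) /\
  (forall z, (forall z', (prox_obj g x z <= prox_obj g x z')%E) -> z = y).

Definition convex_fun2 (f : R * R -> R) : Prop :=
  forall x y (t : R), 0 <= t -> t <= 1 ->
    f (t *: x + (1 - t) *: y) <= t * f x + (1 - t) * f y.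
End Defs.

(* Main.v *)
Require Import Defs.
From HB Require Import structures.
From mathcomp Require Import all_boot all_order all_algebra.
From mathcomp Require Import all_classical all_reals all_analysis.
From mathcomp Require Import lra ring.
Import Order.TTheory GRing.Theory Num.Theory.
Import numFieldNormedType.Exports.
Local Open Scope classical_set_scope.
Local Open Scope ring_scope.
Section Part1.
Variable R : realType.
Variables w1 w2 : R.
Hypothesis hw1 : 0 <= w1.
Hypothesis hw12 : w1 < w2.

Ltac lraw := have ? := hw1; have ? := hw12; lra.
Ltac nraw := have ? := hw1; have ? := hw12; nra.

Definition Qf (u z : R * R) : R :=
  rowl w1 w2 z + ((u.1 - z.1) * (u.1 - z.1) + (u.2 - z.2) * (u.2 - z.2)) / 2.
Definition touch (u p : R * R) := forall z, Qf u p <= Qf u z.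

Lemma rowlE (z : R * R) : rowl w1 w2 z =
  if `|z.2| <= `|z.1| then w1 * `|z.1| + w2 * `|z.2| else w1 * `|z.2| + w2 * `|z.1|.
Proof.
rewrite /rowl /inner2 /absdown /= maxEle minEle.
case: (lerP `|z.1| `|z.2|) => h.
  case: (lerP `|z.2| `|z.1|) => h2 //.
  have -> : `|z.1| = `|z.2| by apply/le_anti; rewrite h h2.
  by [].
by rewrite ifT ?ltW.
Qed.

Lemma absP (t : R) : 0 <= `|t| /\ t <= `|t| /\ - t <= `|t| /\ `|t| * `|t| = t * t.
Proof.
case: (lerP 0 t) => h.
  by rewrite ger0_norm //; lra.
by rewrite ltr0_norm //; split; [lra|split; [lra|split; [lra|ring]]].
Qed.

Definition soft (a w : R) : R := Num.max 0 (a - w).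
Lemma softP (a w : R) : (a <= w /\ soft a w = 0) \/ (w < a /\ soft a w = a - w).
Proof.
rewrite /soft; case: (lerP a w) => h.
  by left; split => //; apply: max_l; lra.
by right; split => //; apply: max_r; lra.
Qed.

Lemma sc1 (a w t : R) : 0 <= a -> 0 <= w ->
  w * soft a w + (a - soft a w) * (a - soft a w) / 2
  <= w * `|t| + (a - t) * (a - t) / 2.
Proof.
move=> ha hw; have [h0 [h1 [h2 h3]]] := absP t.
have q1 := sqr_ge0 (t - a + w); have q2 := sqr_ge0 t.
case: (softP a w) => [[h ->]|[h ->]].
  case: (lerP 0 t) => ht.
    rewrite ger0_norm //; nra.
  rewrite ltr0_norm //; nra.
case: (lerP 0 t) => ht.
  rewrite ger0_norm //; nra.
rewrite ltr0_norm //; nra.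
Qed.

Lemma touch_sep (u : R * R) : 0 <= u.2 -> u.2 <= u.1 ->
  touch u (soft u.1 w1, soft u.2 w2).
Proof.
move=> h2 h21 z; rewrite /Qf !rowlE /=.
have hp1 : 0 <= soft u.1 w1 by case: (softP u.1 w1) => [[? ->]|[? ->]]; lra.
have hp2 : 0 <= soft u.2 w2 by case: (softP u.2 w2) => [[? ->]|[? ->]]; lra.
have hp12 : soft u.2 w2 <= soft u.1 w1.
  by case: (softP u.1 w1) => [[? ->]|[? ->]]; case: (softP u.2 w2) => [[? ->]|[? ->]]; lraw.
rewrite (ger0_norm hp1) (ger0_norm hp2) hp12.
have A1 := sc1 u.1 w1 z.1 (le_trans h2 h21) hw1.
have A2 := sc1 u.2 w2 z.2 h2 (le_trans hw1 (ltW hw12)).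
have [a0 [a1 [a2 a3]]] := absP z.1.
have [b0 [b1 [b2 b3]]] := absP z.2.
have B1 := sc1 u.1 w1 `|z.2| (le_trans h2 h21) hw1.
have B2 := sc1 u.2 w2 `|z.1| h2 (le_trans hw1 (ltW hw12)).
rewrite normr_id in B1; rewrite normr_id in B2.
move: (soft u.1 w1) (soft u.2 w2) hp1 hp2 hp12 A1 A2 B1 B2 => p1 p2 hp1 hp2 hp12 A1 A2 B1 B2.
case: ifP => hz.
  lraw.
have hz' : `|z.1| < `|z.2| by rewrite ltNge hz.
have C : (u.1 - `|z.2|) * (u.1 - `|z.2|) + (u.2 - `|z.1|) * (u.2 - `|z.1|)
   <= (u.1 - z.1) * (u.1 - z.1) + (u.2 - z.2) * (u.2 - z.2).
  have E1 : (u.1 - `|z.1|) * (u.1 - `|z.1|) <= (u.1 - z.1) * (u.1 - z.1) by nra.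
  have E2 : (u.2 - `|z.2|) * (u.2 - `|z.2|) <= (u.2 - z.2) * (u.2 - z.2) by nra.
  nra.
lraw.
Qed.

Definition sw (z : R * R) : R * R := (z.2, z.1).
Definition ng1 (z : R * R) : R * R := (- z.1, z.2).
Definition ng2 (z : R * R) : R * R := (z.1, - z.2).

Lemma Qf_sw u z : Qf (sw u) (sw z) = Qf u z.
Proof. by rewrite /Qf /rowl /absdown /= maxC minC; lra. Qed.
Lemma Qf_ng1 u z : Qf (ng1 u) (ng1 z) = Qf u z.
Proof. by rewrite /Qf /rowl /absdown /= normrN; lra. Qed.
Lemma Qf_ng2 u z : Qf (ng2 u) (ng2 z) = Qf u z.
Proof. by rewrite /Qf /rowl /absdown /= normrN; lra. Qed.

Lemma touch_T (T : R * R -> R * R) : (forall z, T (T z) = z) ->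
  (forall u z, Qf (T u) (T z) = Qf u z) ->
  forall u p, touch u p -> touch (T u) (T p).
Proof.
move=> TT QT u p h z; rewrite QT -{1}(TT z) QT; exact: h.
Qed.

Definition Cert (lam : R) (x y : R * R) := exists u p q (th : R),
  [/\ 0 <= th <= 1, touch u p, touch u q,
      y.1 = th * p.1 + (1 - th) * q.1 /\ y.2 = th * p.2 + (1 - th) * q.2 &
      x.1 = lam * u.1 + (1 - lam) * y.1 /\ x.2 = lam * u.2 + (1 - lam) * y.2].

Lemma swK z : sw (sw z) = z. Proof. by case: z. Qed.
Lemma ng1K z : ng1 (ng1 z) = z. Proof. by case: z => a b; rewrite /ng1 /= opprK. Qed.
Lemma ng2K z : ng2 (ng2 z) = z. Proof. by case: z => a b; rewrite /ng2 /= opprK. Qed.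

Lemma Cert_sw lam x y : Cert lam x y -> Cert lam (sw x) (sw y).
Proof.
move=> [u [p [q [th [hth tp tq [e1 e2] [e3 e4]]]]]].
exists (sw u), (sw p), (sw q), th; split.
- by [].
- exact (touch_T sw swK Qf_sw _ _ tp).
- exact (touch_T sw swK Qf_sw _ _ tq).
- rewrite /sw /=; split; [rewrite e2 | rewrite e1]; ring.
- rewrite /sw /=; split; [rewrite e4 | rewrite e3]; ring.
Qed.
Lemma Cert_ng1 lam x y : Cert lam x y -> Cert lam (ng1 x) (ng1 y).
Proof.
move=> [u [p [q [th [hth tp tq [e1 e2] [e3 e4]]]]]].
exists (ng1 u), (ng1 p), (ng1 q), th; split.
- by [].
- exact (touch_T ng1 ng1K Qf_ng1 _ _ tp).
- exact (touch_T ng1 ng1K Qf_ng1 _ _ tq).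
- rewrite /ng1 /=; split; [rewrite e1 | rewrite e2]; ring.
- rewrite /ng1 /=; split; [rewrite e3 | rewrite e4]; ring.
Qed.
Lemma Cert_ng2 lam x y : Cert lam x y -> Cert lam (ng2 x) (ng2 y).
Proof.
move=> [u [p [q [th [hth tp tq [e1 e2] [e3 e4]]]]]].
exists (ng2 u), (ng2 p), (ng2 q), th; split.
- by [].
- exact (touch_T ng2 ng2K Qf_ng2 _ _ tp).
- exact (touch_T ng2 ng2K Qf_ng2 _ _ tq).
- rewrite /ng2 /=; split; [rewrite e1 | rewrite e2]; ring.
- rewrite /ng2 /=; split; [rewrite e3 | rewrite e4]; ring.
Qed.

Lemma pdivle {c a b : R} : 0 < c -> c * a <= c * b -> a <= b.
Proof. by move=> hc; rewrite ler_pM2l. Qed.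
Lemma pdiveq {c a b : R} : 0 < c -> c * a = c * b -> a = b.
Proof. by move=> hc; apply: mulfI; rewrite gt_eqF. Qed.
Lemma solve_lin (c a : R) : 0 < c -> exists t, c * t = a.
Proof. by move=> hc; exists (a / c); rewrite mulrC divfK ?gt_eqF. Qed.

Lemma theta_ex (a b c d : R) : a + b = c + d -> 0 <= a - b -> a - b <= c - d ->
  exists th, (0 <= th <= 1) /\ a = th * c + (1 - th) * d /\ b = th * d + (1 - th) * c.
Proof.
move=> h1 h2 h3.
case: (lerP (c - d) 0) => h.
  exists 1; split; first by rewrite ler01 lexx.
  split; lra.
have [r hr] := solve_lin (c - d) (a - b) h.
have r0 : 0 <= r by apply: (pdivle h); lra.
have r1 : r <= 1 by apply: (pdivle h); lra.
exists ((1 + r) / 2); split; first by apply/andP; split; lra.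
split; lra.
Qed.

Lemma scal_inv (lam x w : R) : 0 < lam -> lam < 1 -> 0 <= x -> 0 <= w ->
  exists u, [/\ x = lam * u + (1 - lam) * soft u w, 0 <= u, lam * u <= x,
     u <= x + (1 - lam) * w & (lam * u = x \/ u = x + (1 - lam) * w)].
Proof.
move=> l0 l1 x0 w0.
case: (lerP x (lam * w)) => h.
  have [u hu] := solve_lin lam x l0.
  have uw : u <= w by apply: (pdivle l0); lra.
  have u0 : 0 <= u by apply: (pdivle l0); lra.
  exists u; split => //; last by left.
  - by case: (softP u w) => [[_ ->]|[? _]]; lra.
  - lra.
  - apply: (pdivle l0); nra.
exists (x + (1 - lam) * w); split => //; last by right.
- case: (softP (x + (1 - lam) * w) w) => [[? ->]|[? ->]]; nra.
- nra.
- nra.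
Qed.

Lemma canon_tie (lam : R) (x : R * R) : 0 < lam -> lam < 1 -> 0 <= x.2 -> x.2 <= x.1 ->
  x.1 - x.2 <= (1 - lam) * (w2 - w1) -> lam * (x.1 + (1 - lam) * w1) <= x.2 ->
  exists s y1 y2, [/\ 0 <= s, (1 - lam) * y1 = x.1 - lam * s,
     (1 - lam) * y2 = x.2 - lam * s, y1 + y2 = soft s w1 + soft s w2 &
     0 <= y1 - y2 <= soft s w1 - soft s w2].
Proof.
move=> l0 l1 x20 x21 T1 T2.
have m0 : 0 < 1 - lam by lra.
have p0 : 0 < 1 + lam by lra.
have F1 : lam * w1 <= x.1.
  apply: (pdivle m0); nra.
have F2 : lam * w1 <= x.2.
  have : lam * (lam * w1) <= lam * x.1 by rewrite ler_pM2l.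
  nra.
case: (lerP (x.1 + x.2) ((1 + lam) * w2 - (1 - lam) * w1)) => B.
  have [s hs] := solve_lin (1 + lam) (x.1 + x.2 + (1 - lam) * w1) p0.
  have sw1 : w1 <= s by apply: (pdivle p0); nra.
  have sw2 : s <= w2 by apply: (pdivle p0); nra.
  have [y1 hy1] := solve_lin (1 - lam) (x.1 - lam * s) m0.
  have [y2 hy2] := solve_lin (1 - lam) (x.2 - lam * s) m0.
  have e1 : soft s w1 = s - w1 by case: (softP s w1) => [[? ->]|[? ->]]; lraw.
  have e2 : soft s w2 = 0 by case: (softP s w2) => [[? ->]|[? ->]]; lraw.
  exists s, y1, y2; split => //.
  - lraw.
  - rewrite e1 e2; apply: (pdiveq m0); nra.
  - apply/andP; split.
      by apply: (pdivle m0); nra.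
    rewrite e1 e2; apply: (pdivle (mulr_gt0 m0 p0)); nra.
have [s hs] := solve_lin 2 (x.1 + x.2 + (1 - lam) * (w1 + w2)) (ltr0Sn R 1).
have sw2 : w2 <= s by nraw.
have [y1 hy1] := solve_lin (1 - lam) (x.1 - lam * s) m0.
have [y2 hy2] := solve_lin (1 - lam) (x.2 - lam * s) m0.
have e1 : soft s w1 = s - w1 by case: (softP s w1) => [[? ->]|[? ->]]; lraw.
have e2 : soft s w2 = s - w2 by case: (softP s w2) => [[? ->]|[? ->]]; lraw.
exists s, y1, y2; split => //.
- lraw.
- rewrite e1 e2; apply: (pdiveq m0); nra.
- apply/andP; split.
    by apply: (pdivle m0); nra.
  rewrite e1 e2; apply: (pdivle m0); nra.
Qed.

Lemma canon (lam : R) (x : R * R) : 0 < lam -> lam < 1 -> 0 <= x.2 -> x.2 <= x.1 ->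
  exists y, Cert lam x y.
Proof.
move=> l0 l1 x20 x21.
have m0 : 0 < 1 - lam by lra.
case: (boolP ((x.1 - x.2 <= (1 - lam) * (w2 - w1)) && (lam * (x.1 + (1 - lam) * w1) <= x.2))).
  move=> /andP [T1 T2].
  have [s [y1 [y2 [s0 hy1 hy2 hsum /andP [hd1 hd2]]]]] := canon_tie _ _ l0 l1 x20 x21 T1 T2.
  have [th [hth [ea eb]]] := theta_ex _ _ _ _ hsum hd1 hd2.
  exists (y1, y2), (s, s), (soft s w1, soft s w2), (soft s w2, soft s w1), th; split => //.
  - exact: touch_sep.
  - exact (touch_T sw swK Qf_sw _ _ (touch_sep (s, s) s0 (lexx s))).
  - by rewrite /=; split; lra.
move=> nT.
have [u1 [e1 u10 lu1 u1b c1]] := scal_inv _ _ _ l0 l1 (le_trans x20 x21) hw1.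
have [u2 [e2 u20 lu2 u2b c2]] := scal_inv _ _ _ l0 l1 x20 (le_trans hw1 (ltW hw12)).
have u21 : u2 <= u1.
  apply: (pdivle l0).
  case: c1 => c1; first lra.
  move: nT; case: (lerP (x.1 - x.2) ((1 - lam) * (w2 - w1))) => /= h1;
    case: (lerP (lam * (x.1 + (1 - lam) * w1)) x.2) => //= h2 _.
  - nra.
  - rewrite ler_pM2l //; lraw.
  - rewrite c1; lraw.
exists (soft u1 w1, soft u2 w2), (u1, u2), (soft u1 w1, soft u2 w2), (soft u1 w1, soft u2 w2), 1.
split.
- by rewrite ler01 lexx.
- exact: touch_sep.
- exact: touch_sep.
- rewrite /=; split; ring.
- rewrite /=; split; lra.
Qed.

Lemma cert_ex (lam : R) (x : R * R) : 0 < lam -> lam < 1 -> exists y, Cert lam x y.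
Proof.
move=> l0 l1.
have H1 : forall x : R * R, 0 <= x.1 -> 0 <= x.2 -> exists y, Cert lam x y.
  move=> z z1 z2; case: (lerP z.2 z.1) => h.
    exact: canon.
  have [y hy] := canon _ (sw z) l0 l1 z1 (ltW h).
  by exists (sw y); rewrite -(swK z); apply: Cert_sw.
have H2 : forall x : R * R, 0 <= x.1 -> exists y, Cert lam x y.
  move=> z z1; case: (lerP 0 z.2) => h; first exact: H1.
  have [y hy] := H1 (ng2 z) z1 (ltW (eq_ind_r is_true h (oppr_gt0 z.2))).
  by exists (ng2 y); rewrite -(ng2K z); apply: Cert_ng2.
case: (lerP 0 x.1) => h; first exact: H2.
have [y hy] := H2 (ng1 x) (ltW (eq_ind_r is_true h (oppr_gt0 x.1))).
by exists (ng1 y); rewrite -(ng1K x); apply: Cert_ng1.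
Qed.

Definition gr (z : R * R) : R := rowl w1 w2 z + sqnorm2 z / 2.
Definition gE (z : R * R) : \bar R := (rowl w1 w2 z + sqnorm2 z / 2)%:E.

Lemma conj_ge z u : ((inner2 z u - gr z)%:E <= fconj gE u)%E.
Proof. by apply: ereal_sup_ubound; exists z => //; rewrite EFinB. Qed.

Lemma touch_conj u p : touch u p -> forall z, inner2 z u - gr z <= inner2 p u - gr p.
Proof.
move=> tp z; have := tp z; rewrite /Qf /gr /inner2 /sqnorm2 /inner2; lra.
Qed.

Lemma conj_touch u p : touch u p -> fconj gE u = (inner2 p u - gr p)%:E.
Proof.
move=> tp; apply/le_anti; rewrite conj_ge andbT.
apply: ge_ereal_sup => _ [z _ <-]; rewrite -EFinB lee_fin.
exact: touch_conj.
Qed.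

Lemma biconj_le (a b y : R * R) (th : R) : 0 <= th -> th <= 1 ->
  y.1 = th * a.1 + (1 - th) * b.1 -> y.2 = th * a.2 + (1 - th) * b.2 ->
  (fbiconj gE y <= (th * gr a + (1 - th) * gr b)%:E)%E.
Proof.
move=> t0 t1 e1 e2; rewrite /fbiconj.
apply: ge_ereal_sup => _ [v _ <-].
have ha := conj_ge a v; have hb := conj_ge b v.
move: (fconj gE v) ha hb => [r| |] ha hb.
- rewrite -EFinB lee_fin; rewrite lee_fin in ha; rewrite lee_fin in hb.
  have h1 : 0 <= th * (r - (inner2 a v - gr a)) by apply: mulr_ge0 => //; lra.
  have h2 : 0 <= (1 - th) * (r - (inner2 b v - gr b)) by apply: mulr_ge0; lra.
  rewrite /inner2 in h1 h2 *; rewrite e1 e2; nra.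
- by rewrite /= addeNy leNye.
- by rewrite leeNy_eq in ha.
Qed.

Lemma biconj_ge u p z : touch u p ->
  ((inner2 z u - (inner2 p u - gr p))%:E <= fbiconj gE z)%E.
Proof.
move=> tp; apply: ereal_sup_ubound; exists u => //.
rewrite (conj_touch _ _ tp) -EFinB; congr (_%:E); rewrite /inner2; ring.
Qed.

Lemma rowl_ge0 z : 0 <= rowl w1 w2 z.
Proof.
rewrite rowlE; have [a0 _] := absP z.1; have [b0 _] := absP z.2.
have ? := hw1; have ? := hw12.
case: ifP => _; apply: addr_ge0; apply: mulr_ge0 => //; lra.
Qed.

Lemma touch00 : touch (0, 0) (0, 0).
Proof.
move=> z; rewrite /Qf /=.
have -> : rowl w1 w2 (0, 0) = 0 by rewrite rowlE /= normr0 lexx; ring.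
have := rowl_ge0 z; nra.
Qed.

Definition Gr (z : R * R) : R := fine (fbiconj gE z).

Lemma Gr_le (a b y : R * R) (th : R) : 0 <= th -> th <= 1 ->
  y.1 = th * a.1 + (1 - th) * b.1 -> y.2 = th * a.2 + (1 - th) * b.2 ->
  Gr y <= th * gr a + (1 - th) * gr b /\ fbiconj gE y = (Gr y)%:E.
Proof.
move=> t0 t1 e1 e2.
have hi := biconj_le _ _ _ _ t0 t1 e1 e2.
have lo := biconj_ge _ _ y touch00.
rewrite /Gr; move: (fbiconj gE y) hi lo => [r| |] hi lo //=.
Qed.

Lemma GrE z : fbiconj gE z = (Gr z)%:E.
Proof.
have [_ ->] := Gr_le z z z 1 ler01 (lexx 1) (ltac:(ring)) (ltac:(ring)) => //.
Qed.

Definition Ob (lam : R) (x z : R * R) : R :=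
  (Gr z - sqnorm2 z / 2) * lam + sqnorm2 (x - z) / 2.

Lemma growth lam x y : 0 < lam -> lam < 1 -> Cert lam x y ->
  forall z, Ob lam x y + (1 - lam) / 2 * sqnorm2 (z - y) <= Ob lam x z.
Proof.
move=> l0 l1 [u [p [q [th [/andP [t0 t1] tp tq [e1 e2] [e3 e4]]]]]] z.
set c := inner2 p u - gr p.
have gq : gr q = inner2 q u - c.
  have := touch_conj _ _ tp q; have := touch_conj _ _ tq p; rewrite /c; lra.
have [Gy _] := Gr_le _ _ _ _ t0 t1 e1 e2.
have Gy' : Gr y <= inner2 y u - c.
  have <- : th * gr p + (1 - th) * gr q = inner2 y u - c.
    by rewrite gq /c /inner2 e1 e2; ring.
  exact: Gy.
have Gz : inner2 z u - c <= Gr z.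
  have := biconj_ge _ _ z tp; rewrite GrE lee_fin.
  by rewrite /c.
have h1 : 0 <= lam * (Gr z - (inner2 z u - c)) by apply: mulr_ge0; lra.
have h2 : 0 <= lam * ((inner2 y u - c) - Gr y) by apply: mulr_ge0; lra.
move: h1 h2; rewrite /Ob /sqnorm2 /inner2 /= e3 e4.
lra.
Qed.

Lemma sq_ge0 (z : R * R) : 0 <= sqnorm2 z.
Proof. by rewrite /sqnorm2 /inner2; apply: addr_ge0; apply: mulr_ge0_le0 || nra. Qed.

Lemma minOb (lam : R) (x y z : R * R) : 0 < lam -> lam < 1 -> Cert lam x y -> Ob lam x y <= Ob lam x z.
Proof.
move=> l0 l1 c; have := growth _ _ _ l0 l1 c z; have := sq_ge0 (z - y).
have : 0 <= (1 - lam) / 2 by apply: divr_ge0; lra.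
nra.
Qed.

Lemma envE z : rowl_env w1 w2 z = (Gr z - sqnorm2 z / 2)%:E.
Proof.
rewrite /rowl_env.
have -> : fbiconj (fun y => (rowl w1 w2 y + sqnorm2 y / 2)%:E) z = fbiconj gE z by [].
by rewrite GrE EFinB.
Qed.

Lemma proxE (lam : R) (x z : R * R) :
  prox_obj (fun y => (rowl_env w1 w2 y * lam%:E)%E) x z = (Ob lam x z)%:E.
Proof. by rewrite /prox_obj envE -EFinM -EFinD. Qed.

Lemma sprox_of (lam : R) (x y : R * R) : 0 < lam -> lam < 1 -> Cert lam x y ->
  is_sprox (fun y => (rowl_env w1 w2 y * lam%:E)%E) x y.
Proof.
move=> l0 l1 c; split.
  by move=> z; rewrite !proxE lee_fin; apply: minOb l0 l1 c.
move=> z H; have := H y; rewrite !proxE lee_fin => h.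
have := growth _ _ _ l0 l1 c z.
have m0 : 0 < (1 - lam) / 2 by apply: divr_gt0; lra.
rewrite /sqnorm2 /inner2 /= => g.
have : (1 - lam) / 2 * ((z.1 - y.1) * (z.1 - y.1) + (z.2 - y.2) * (z.2 - y.2)) <= 0 by lra.
rewrite pmulr_rle0 // => hs.
have q1 := sqr_ge0 (z.1 - y.1); have q2 := sqr_ge0 (z.2 - y.2); rewrite !expr2 in q1 q2.
have a1 : (z.1 - y.1) * (z.1 - y.1) = 0 by lra.
have a2 : (z.2 - y.2) * (z.2 - y.2) = 0 by lra.
move/eqP: a1; rewrite mulf_eq0 orbb subr_eq0 => /eqP b1.
move/eqP: a2; rewrite mulf_eq0 orbb subr_eq0 => /eqP b2.
by move: b1 b2; clear; case: z => ? ?; case: y => ? ? /= -> ->.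
Qed.

Lemma mono_of (lam : R) (x x' y y' : R * R) : 0 < lam -> lam < 1 -> Cert lam x y -> Cert lam x' y' ->
  (1 - lam) * sqnorm2 (y - y') <= inner2 (x - x') (y - y').
Proof.
move=> l0 l1 c c'.
have g1 := growth _ _ _ l0 l1 c y'; have g2 := growth _ _ _ l0 l1 c' y.
move: g1 g2; rewrite /Ob /sqnorm2 /inner2 /=; lra.
Qed.

Lemma lip_of (mu : R) (a b : R * R) : 0 < mu -> mu * sqnorm2 a <= inner2 b a ->
  enorm2 a <= mu^-1 * enorm2 b.
Proof.
move=> m0 h.
have hA := sq_ge0 a; have hB := sq_ge0 b.
have cs : inner2 b a * inner2 b a <= sqnorm2 a * sqnorm2 b.
  rewrite /inner2 /sqnorm2 /inner2; have := sqr_ge0 (a.1 * b.2 - a.2 * b.1); nra.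
have key : sqnorm2 a <= mu^-1 ^+ 2 * sqnorm2 b.
  have mi : mu * mu^-1 = 1 by rewrite mulfV ?gt_eqF.
  have mi0 : 0 < mu^-1 by rewrite invr_gt0.
  case: (lerP (sqnorm2 a) 0) => ha.
    have : 0 <= mu^-1 ^+ 2 * sqnorm2 b by apply: mulr_ge0 => //; apply: sqr_ge0.
    lra.
  have : mu * mu * sqnorm2 a <= sqnorm2 b.
    have : (mu * sqnorm2 a) * (mu * sqnorm2 a) <= sqnorm2 a * sqnorm2 b.
      have : 0 <= mu * sqnorm2 a by apply: mulr_ge0; lra.
      nra.
    nra.
  move=> hh; rewrite expr2.
  have : mu^-1 * mu^-1 * (mu * mu * sqnorm2 a) <= mu^-1 * mu^-1 * sqnorm2 b.
    by apply: ler_wpM2l => //; apply: mulr_ge0; lra.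
  have -> : mu^-1 * mu^-1 * (mu * mu * sqnorm2 a) = sqnorm2 a.
    by field; exact: lt0r_neq0.
  by [].
rewrite /enorm2.
have -> : mu^-1 * Num.sqrt (sqnorm2 b) = Num.sqrt (mu^-1 ^+ 2 * sqnorm2 b).
  rewrite sqrtrM ?sqr_ge0 // sqrtr_sqr ger0_norm //.
  by rewrite invr_ge0; apply: ltW.
exact: ler_wsqrtr.
Qed.

Definition Fd (lam : R) (Rd : R * R -> R * R) (x : R * R) : R :=
  sqnorm2 x / 2 - Ob lam x (Rd x).

Lemma f_bounds (lam : R) (Rd : R * R -> R * R) : 0 < lam -> lam < 1 ->
  (forall x, Cert lam x (Rd x)) -> forall x z,
  0 <= Fd lam Rd z - Fd lam Rd x - inner2 (Rd x) (z - x) /\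
  Fd lam Rd z - Fd lam Rd x - inner2 (Rd x) (z - x) <= inner2 (Rd z - Rd x) (z - x).
Proof.
move=> l0 l1 HR x z.
have m1 := minOb _ _ _ (Rd x) l0 l1 (HR z).
have m2 := minOb _ _ _ (Rd z) l0 l1 (HR x).
move: m1 m2; rewrite /Fd /Ob /sqnorm2 /inner2 /=.
move=> m1 m2; split; lra.
Qed.

Lemma f_quad (lam : R) (Rd : R * R -> R * R) : 0 < lam -> lam < 1 ->
  (forall x, Cert lam x (Rd x)) -> forall x h,
  `|Fd lam Rd (h + x) - Fd lam Rd x - inner2 (Rd x) h| <= (1 - lam)^-1 * sqnorm2 h.
Proof.
move=> l0 l1 HR x h.
have [b1 b2] := f_bounds _ _ l0 l1 HR x (h + x).
rewrite addrK in b1 b2.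
rewrite ger0_norm //.
apply: (le_trans b2).
have m0 : 0 < 1 - lam by lra.
have mo := mono_of _ _ _ _ _ l0 l1 (HR (h + x)) (HR x).
rewrite addrK in mo.
set I := inner2 (Rd (h + x) - Rd x) h.
have hI : inner2 h (Rd (h + x) - Rd x) = I by rewrite /I /inner2; ring.
rewrite hI in mo.
have am : (1 - lam) * I <= (1 - lam) ^+ 2 / 2 * sqnorm2 (Rd (h + x) - Rd x) + sqnorm2 h / 2.
  rewrite /I /sqnorm2 /inner2 /=.
  have := sqr_ge0 ((1 - lam) * (Rd (h + x) - Rd x).1 - h.1).
  have := sqr_ge0 ((1 - lam) * (Rd (h + x) - Rd x).2 - h.2).
  rewrite /= !expr2; nra.
have am2 : (1 - lam) * I <= sqnorm2 h.
  have : (1 - lam) * ((1 - lam) * sqnorm2 (Rd (h + x) - Rd x)) <= (1 - lam) * I.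
    by rewrite ler_pM2l.
  rewrite expr2 in am; nra.
rewrite -ler_pdivlMl // in am2.
Qed.

Lemma f_convex (lam : R) (Rd : R * R -> R * R) : 0 < lam -> lam < 1 ->
  (forall x, Cert lam x (Rd x)) -> convex_fun2 (Fd lam Rd).
Proof.
move=> l0 l1 HR a b t t0 t1.
set p := t *: a + (1 - t) *: b.
have e1 : p.1 = t * a.1 + (1 - t) * b.1 by [].
have e2 : p.2 = t * a.2 + (1 - t) * b.2 by [].
clearbody p.
have [h1 _] := f_bounds _ _ l0 l1 HR p a.
have [h2 _] := f_bounds _ _ l0 l1 HR p b.
have k1 : 0 <= t * (Fd lam Rd a - Fd lam Rd p - inner2 (Rd p) (a - p)) by apply: mulr_ge0.
have k2 : 0 <= (1 - t) * (Fd lam Rd b - Fd lam Rd p - inner2 (Rd p) (b - p)).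
  by apply: mulr_ge0 => //; lra.
move: k1 k2; rewrite /inner2 /= e1 e2.
move: (Fd lam Rd a) (Fd lam Rd b) (Fd lam Rd p) (Rd p) => A B P r.
nra.
Qed.
End Part1.
Section Diff.
Variable R : realType.

Lemma sq_le_norm (h : R * R) : sqnorm2 h <= 2 * (`|h| * `|h|).
Proof.
rewrite prod_normE /sqnorm2 /inner2.
have m1 : `|h.1| <= Num.max `|h.1| `|h.2| by rewrite le_max lexx.
have m2 : `|h.2| <= Num.max `|h.1| `|h.2| by rewrite le_max lexx orbT.
have a1 : `|h.1| * `|h.1| = h.1 * h.1 by rewrite -normrM -expr2 ger0_norm // sqr_ge0.
have a2 : `|h.2| * `|h.2| = h.2 * h.2 by rewrite -normrM -expr2 ger0_norm // sqr_ge0.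
have p1 := normr_ge0 h.1; have p2 := normr_ge0 h.2.
move: (Num.max _ _) m1 m2 => M m1 m2.
nra.
Qed.

Lemma diff_of (f : R * R -> R) (x y : R * R) (L : R) : 0 <= L ->
  (forall h, `|f (h + x) - f x - inner2 y h| <= L * sqnorm2 h) ->
  differentiable f x /\ (forall h, 'd f x h = inner2 y h).
Proof.
move=> L0 H.
pose g := fun h : R * R => inner2 y h.
have glin : linear g.
  by move=> a u v; rewrite /g /inner2 /=; rewrite /GRing.scale /=; ring.
pose gM := GRing.isLinear.Build _ _ _ _ _ glin.
pose gL : {linear _ -> _} := HB.pack g gM.
have gc : continuous gL.
  apply: bounded_linear_continuous; apply/linear_boundedP.
  apply: filterS (nbhs_pinfty_ge (num_real (`|y.1| + `|y.2|))) => M hM h.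
  rewrite /= /g /inner2.
  have b : `|y.1 * h.1 + y.2 * h.2| <= (`|y.1| + `|y.2|) * `|h|.
    rewrite prod_normE.
    have m1 : `|h.1| <= Num.max `|h.1| `|h.2| by rewrite le_max lexx.
    have m2 : `|h.2| <= Num.max `|h.1| `|h.2| by rewrite le_max lexx orbT.
    have := ler_normD (y.1 * h.1) (y.2 * h.2); rewrite !normrM.
    have p1 := normr_ge0 y.1; have p2 := normr_ge0 y.2.
    move: (Num.max _ _) m1 m2 => N m1 m2.
    nra.
  by apply: (le_trans b); apply: ler_wpM2r.
have o : f \o shift x = cst (f x) + (gL : R * R -> R) +o_ (0 : R * R) id.
  apply/eqaddoP => e e0.
  near=> h.
  rewrite /= opprD addrA.
  have Hh := H h.
  have Sh := sq_le_norm h.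
  have hn : `|h| < e / (2 * L + 1).
    near: h. have ep : 0 < e / (2 * L + 1) by apply: divr_gt0 => //; lra.
    exact (nbhs0_lt (V := (R * R)%type) ep).
  have hn' : (2 * L + 1) * `|h| <= e.
    by rewrite mulrC -ler_pdivlMr ?ltW //; lra.
  have h0 := normr_ge0 h.
  rewrite /=.
  apply: (le_trans Hh).
  have : L * sqnorm2 h <= L * (2 * (`|h| * `|h|)) by apply: ler_wpM2l.
  nra.
have dE := diff_unique gc o.
split; last by move=> h; rewrite dE.
by apply/diff_locallyP; rewrite dE; split.
Unshelve. all: by end_near.
Qed.
End Diff.

Theorem corollary2 (R : realType) (w1 w2 : R) (hw1 : 0 <= w1) (hw12 : w1 < w2)
  (delta : R) (hdelta : 0 < delta) :
  exists Rd : R * R -> R * R,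
    (forall x, is_sprox (fun y => (rowl_env w1 w2 y * ((delta + 1)^-1)%:E)%E) x (Rd x)) /\
    (exists f : R * R -> R,
        convex_fun2 f /\
        (forall x, differentiable f x) /\
        (forall x h, 'd f x h = inner2 (Rd x) h)) /\
    (forall x y, enorm2 (Rd x - Rd y) <= (1 + delta^-1) * enorm2 (x - y)).
Proof.
have d1 : 0 < delta + 1 by lra.
have hl : (delta + 1)^-1 * (delta + 1) = 1 by rewrite mulVf // gt_eqF.
have l0 : 0 < (delta + 1)^-1 by rewrite invr_gt0.
have l1 : (delta + 1)^-1 < 1 by nra.
have m0 : 0 < 1 - (delta + 1)^-1 by lra.
have [Rd HR] := choice (fun x => cert_ex _ _ _ hw1 hw12 _ x l0 l1).
exists Rd; split; last split.
- by move=> x; apply: (sprox_of _ _ _ hw1 hw12 _ _ _ l0 l1 (HR x)).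
- exists (Fd _ w1 w2 (delta + 1)^-1 Rd); split; first exact: (f_convex _ _ _ hw1 hw12 _ _ l0 l1 HR).
  have L0 : 0 <= (1 - (delta + 1)^-1)^-1 by rewrite invr_ge0 ltW.
  split => x; have [D1 D2] := diff_of _ _ _ _ _ L0 (f_quad _ _ _ hw1 hw12 _ _ l0 l1 HR x) => //.
- move=> x y.
  have := lip_of _ _ _ _ m0 (mono_of _ _ _ hw1 hw12 _ _ _ _ _ l0 l1 (HR x) (HR y)).
  have -> : (1 - (delta + 1)^-1)^-1 = 1 + delta^-1.
    by field; rewrite ?gt_eqF //; lra.
  by [].
Qed.
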